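(* For every $\omega$-elementary wqo $A$, $\mathbf{h}(A)=\omega$.
   Context: A wqo is a quasi-order in which every infinite sequence has $i<j$ with $x_i\le x_j$. $\mathbf{h}(A)$ is the rank of the root of the well-founded tree of finite strictly decreasing sequences of $A$ (root: empty sequence, children: one-element extensions; rank $r(s)=\sup\{r(t)+1: t\text{ child of } s\}$). $\omega$-elementary wqos are given by the grammar $A::=\omega\mid A\sqcup B\mid A\times B\mid A^{<\omega}\mid\mathsf{M}^\diamond(A)\mid\mathcal{P}_f(A)$, where $\omega$ is the wqo $(\omega,\le)$, $\sqcup$ is disjoint union ordered by $\le_A\cup\le_B$, $\times$ is Cartesian product with componentwise order, $A^{<\omega}$ is finite words with subword embedding ($u_1\cdots u_n\le v_1\cdots v_m$ iff there are $f_1<\dots<f_n$ with $u_i\le v_{f_i}$), $\mathsf{M}^\diamond(A)$ is finite multisets with multiset embedding, and $\mathcal{P}_f(A)$ is finite subsets with Hoare embedding ($S\le_H S'$ iff $\forall a\in S\,\exists b\in S'\,a\le b$). *)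

(* Defs.v *)
From Stdlib Require Import List Arith.
Import ListNotations.

Definition rel_at {T : Type} (le : T -> T -> Prop) (u v : list T) (i j : nat) : Prop :=
  exists x y, nth_error u i = Some x /\ nth_error v j = Some y /\ le x y.

Definition qlt {T : Type} (le : T -> T -> Prop) (x y : T) : Prop := le x y /\ ~ le y x.

Fixpoint sdecr {T : Type} (le : T -> T -> Prop) (s : list T) : Prop :=
  match s with
  | [] => True
  | x :: s' =>
      match s' with
      | [] => True
      | y :: _ => qlt le y x /\ sdecr le s'
      end
  end.

(* In the tree of finite strictly decreasing sequences, the children of a node s
   are the one-element extensions s ++ [x] that are still strictly decreasing. *)
Definition child {T : Type} (le : T -> T -> Prop) (s t : list T) : Prop :=
  exists x, t = s ++ [x] /\ sdecr le t.

(* rank_le le n s  <->  r(s) <= n  (for a finite ordinal n), where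
   r(s) = sup { r(t) + 1 : t child of s }. *)
Fixpoint rank_le {T : Type} (le : T -> T -> Prop) (n : nat) (s : list T) : Prop :=
  match n with
  | 0 => forall t, ~ child le s t
  | S m => forall t, child le s t -> rank_le le m t
  end.

(* r(s) = omega :  sup { r(t)+1 : t child of s } = omega, i.e. every child has
   a finite rank and the ranks of the children are unbounded in omega. *)
Definition rank_is_omega {T : Type} (le : T -> T -> Prop) (s : list T) : Prop :=
  (forall t, child le s t -> exists n, rank_le le n t) /\
  (forall n, exists t, child le s t /\ ~ rank_le le n t).

(* h(A) = omega : the root (empty sequence) has rank omega *)
Definition height_is_omega {T : Type} (le : T -> T -> Prop) : Prop :=
  rank_is_omega le [].

Definition sum_le {A B : Type} (leA : A -> A -> Prop) (leB : B -> B -> Prop)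
  (x y : A + B) : Prop :=
  match x, y with
  | inl a, inl a' => leA a a'
  | inr b, inr b' => leB b b'
  | _, _ => False
  end.

Definition prod_le {A B : Type} (leA : A -> A -> Prop) (leB : B -> B -> Prop)
  (x y : A * B) : Prop := leA (fst x) (fst y) /\ leB (snd x) (snd y).

Definition word_le {A : Type} (le : A -> A -> Prop) (u v : list A) : Prop :=
  exists f : nat -> nat,
    (forall i j, i < j < length u -> f i < f j) /\
    (forall i, i < length u -> rel_at le u v i (f i)).

(* multiset embedding (finite multisets represented by lists; the order is
   invariant under permutation): there is an injection f from the elements of u
   into those of v with u_i <= v_{f i} *)
Definition mset_le {A : Type} (le : A -> A -> Prop) (u v : list A) : Prop :=
  exists f : nat -> nat,
    (forall i j, i < length u -> j < length u -> f i = f j -> i = j) /\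
    (forall i, i < length u -> rel_at le u v i (f i)).

(* Hoare embedding on finite subsets (represented by lists; the order is
   invariant under permutation and duplication) *)
Definition hoare_le {A : Type} (le : A -> A -> Prop) (S S' : list A) : Prop :=
  forall a, In a S -> exists b, In b S' /\ le a b.

Inductive ewqo : Type :=
| EOmega : ewqo
| ESum : ewqo -> ewqo -> ewqo
| EProd : ewqo -> ewqo -> ewqo
| EWords : ewqo -> ewqo
| EMset : ewqo -> ewqo
| EPfin : ewqo -> ewqo.

Fixpoint carrier (e : ewqo) : Type :=
  match e with
  | EOmega => nat
  | ESum a b => (carrier a + carrier b)%type
  | EProd a b => (carrier a * carrier b)%type
  | EWords a => list (carrier a)
  | EMset a => list (carrier a)
  | EPfin a => list (carrier a)
  end.

Fixpoint ele (e : ewqo) : carrier e -> carrier e -> Prop :=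
  match e return carrier e -> carrier e -> Prop with
  | EOmega => Nat.le
  | ESum a b => sum_le (ele a) (ele b)
  | EProd a b => prod_le (ele a) (ele b)
  | EWords a => word_le (ele a)
  | EMset a => mset_le (ele a)
  | EPfin a => hoare_le (ele a)
  end.

(* Main.v *)
Require Import Defs.
From Stdlib Require Import List Arith Lia Classical.
Import ListNotations.

Definition eqv {T} (le : T -> T -> Prop) x y := le x y /\ le y x.
Definition IsRefl {T} (le : T -> T -> Prop) := forall x, le x x.
Definition IsTrans {T} (le : T -> T -> Prop) := forall x y z, le x y -> le y z -> le x z.
Definition IsFD {T} (le : T -> T -> Prop) :=
  forall x, exists D, forall y, le y x -> exists d, In d D /\ eqv le y d.
Definition IsChain {T} (le : T -> T -> Prop) :=
  exists g : nat -> T, forall i, qlt le (g i) (g (S i)).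

Lemma inj_bound m n (f : nat -> nat) :
  (forall i j, i < m -> j < m -> f i = f j -> i = j) ->
  (forall i, i < m -> f i < n) -> m <= n.
Proof.
  intros Hi Hb.
  rewrite <- (length_seq m 0), <- (length_seq n 0).
  rewrite <- (length_map f (seq 0 m)).
  apply NoDup_incl_length.
  - apply NoDup_map_NoDup_ForallPairs; [|apply seq_NoDup].
    intros x y Hx Hy. apply in_seq in Hx, Hy. apply Hi; lia.
  - intros a Ha. apply in_map_iff in Ha as [x [<- Hx]].
    apply in_seq in Hx. apply in_seq. specialize (Hb x). lia.
Qed.

Lemma rel_at_len {T} (le : T -> T -> Prop) u v i j :
  rel_at le u v i j -> i < length u /\ j < length v.
Proof.
  intros [x [y [H1 [H2 _]]]]. split; apply nth_error_Some; congruence.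
Qed.

Lemma word_trans {T} (le : T -> T -> Prop) : IsTrans le -> IsTrans (word_le le).
Proof.
  intros Ht u v w [f [Hf1 Hf2]] [g [Hg1 Hg2]].
  exists (fun i => g (f i)). split.
  - intros i j Hij. apply Hg1. split; [apply Hf1; lia|].
    destruct (rel_at_len _ _ _ _ _ (Hf2 j ltac:(lia))); auto.
  - intros i Hi. destruct (Hf2 i Hi) as [x [y [H1 [H2 H3]]]].
    destruct (rel_at_len _ _ _ _ _ (Hf2 i Hi)) as [_ Hl].
    destruct (Hg2 _ Hl) as [y' [z [H1' [H2' H3']]]].
    exists x, z. rewrite H2 in H1'. inversion H1'; subst. eauto.
Qed.

Lemma mset_trans {T} (le : T -> T -> Prop) : IsTrans le -> IsTrans (mset_le le).
Proof.
  intros Ht u v w [f [Hf1 Hf2]] [g [Hg1 Hg2]].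
  exists (fun i => g (f i)). split.
  - intros i j Hi Hj E. apply Hf1; auto. apply Hg1; auto.
    + destruct (rel_at_len _ _ _ _ _ (Hf2 i Hi)); auto.
    + destruct (rel_at_len _ _ _ _ _ (Hf2 j Hj)); auto.
  - intros i Hi. destruct (Hf2 i Hi) as [x [y [H1 [H2 H3]]]].
    destruct (rel_at_len _ _ _ _ _ (Hf2 i Hi)) as [_ Hl].
    destruct (Hg2 _ Hl) as [y' [z [H1' [H2' H3']]]].
    exists x, z. rewrite H2 in H1'. inversion H1'; subst. eauto.
Qed.

Lemma hoare_trans {T} (le : T -> T -> Prop) : IsTrans le -> IsTrans (hoare_le le).
Proof.
  intros Ht u v w H1 H2 a Ha. destruct (H1 a Ha) as [b [Hb Hab]].
  destruct (H2 b Hb) as [c [Hc Hbc]]. eauto.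
Qed.

Lemma F2_rel {T} (le : T -> T -> Prop) u v :
  Forall2 le u v -> forall i, i < length u -> rel_at le u v i i.
Proof.
  induction 1; intros i Hi; simpl in Hi; [lia|].
  destruct i as [|i].
  - exists x, y. simpl. auto.
  - destruct (IHForall2 i ltac:(lia)) as [a [b [H1 [H2 H3]]]].
    exists a, b. simpl. auto.
Qed.

Lemma F2_word {T} (le : T -> T -> Prop) u v : Forall2 le u v -> word_le le u v.
Proof. intros H. exists (fun i => i). split; [lia|]. apply F2_rel; auto. Qed.

Lemma F2_mset {T} (le : T -> T -> Prop) u v : Forall2 le u v -> mset_le le u v.
Proof. intros H. exists (fun i => i). split; [auto|]. apply F2_rel; auto. Qed.

Lemma F2_refl {T} (le : T -> T -> Prop) : IsRefl le -> forall u, Forall2 le u u.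
Proof. intros Hr; induction u; constructor; auto. Qed.

Lemma F2_sym {T} (le : T -> T -> Prop) u v : Forall2 (eqv le) u v -> Forall2 (eqv le) v u.
Proof. induction 1; constructor; auto. destruct H; split; auto. Qed.

Lemma F2_weak {T} (le : T -> T -> Prop) u v : Forall2 (eqv le) u v -> Forall2 le u v.
Proof. induction 1; constructor; auto. destruct H; auto. Qed.

Lemma cover_list {T} (le : T -> T -> Prop) : IsFD le -> forall w : list T,
  exists U, forall a b, In b w -> le a b -> exists d, In d U /\ eqv le a d.
Proof.
  intros Hfd w. induction w as [|b w IH].
  - exists []. intros a b [].
  - destruct IH as [U HU]. destruct (Hfd b) as [D HD].
    exists (D ++ U). intros a c [<-|Hc] Hac.
    + destruct (HD a Hac) as [d [Hd E]]. exists d. split; auto. apply in_or_app; auto.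
    + destruct (HU a c Hc Hac) as [d [Hd E]]. exists d. split; auto. apply in_or_app; auto.
Qed.

Lemma pick_list {T} (le : T -> T -> Prop) (U y : list T) :
  (forall a, In a y -> exists d, In d U /\ eqv le a d) ->
  exists z, Forall2 (eqv le) y z /\ incl z U.
Proof.
  induction y as [|a y IH]; intros H.
  - exists []. split; [constructor|intros x []].
  - destruct (H a (or_introl eq_refl)) as [d [Hd E]].
    destruct IH as [z [Hz Hi]]. { intros b Hb. apply H. right; auto. }
    exists (d :: z). split; [constructor; auto|].
    intros x [<-|Hx]; auto.
Qed.

Fixpoint words_upto {T} (n : nat) (U : list T) : list (list T) :=
  match n with
  | 0 => [[]]
  | S n => [] :: flat_map (fun a => map (cons a) (words_upto n U)) U
  end.

Lemma words_upto_in {T} n (U z : list T) :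
  length z <= n -> incl z U -> In z (words_upto n U).
Proof.
  revert z. induction n as [|n IH]; intros z Hl Hi.
  - destruct z; simpl in *; [auto|lia].
  - destruct z as [|a z]; simpl; [auto|right].
    apply in_flat_map. exists a. split; [apply Hi; left; auto|].
    apply in_map. apply IH. simpl in Hl; lia.
    intros x Hx; apply Hi; right; auto.
Qed.

Lemma Forall2_len {A B} (R : A -> B -> Prop) u v : Forall2 R u v -> length u = length v.
Proof. induction 1; simpl; auto. Qed.

Lemma nth_error_In' {T} (l : list T) i x : nth_error l i = Some x -> In x l.
Proof. apply nth_error_In. Qed.

Lemma word_FD {T} (le : T -> T -> Prop) : IsFD le -> IsFD (word_le le).
Proof.
  intros Hfd w. destruct (cover_list le Hfd w) as [U HU].
  exists (words_upto (length w) U). intros y [f [Hf1 Hf2]].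
  destruct (pick_list le U y) as [z [Hz Hi]].
  { intros a Ha. destruct (In_nth_error _ _ Ha) as [i Hn].
    assert (Hil : i < length y) by (apply nth_error_Some; congruence).
    destruct (Hf2 i Hil) as [x [b [H1 [H2 H3]]]]. rewrite Hn in H1; inversion H1; subst.
    eapply HU; eauto. eapply nth_error_In; eauto. }
  exists z. split.
  - apply words_upto_in; auto. rewrite <- (Forall2_len _ _ _ Hz).
    apply (inj_bound _ _ f).
    + intros i j Hi' Hj E. destruct (Nat.lt_trichotomy i j) as [H|[H|H]]; auto.
      * specialize (Hf1 i j ltac:(lia)). lia.
      * specialize (Hf1 j i ltac:(lia)). lia.
    + intros i Hi'. apply (rel_at_len _ _ _ _ _ (Hf2 i Hi')).
  - split; [apply F2_word, F2_weak; auto|apply F2_word, F2_weak, F2_sym; auto].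
Qed.

Lemma mset_FD {T} (le : T -> T -> Prop) : IsFD le -> IsFD (mset_le le).
Proof.
  intros Hfd w. destruct (cover_list le Hfd w) as [U HU].
  exists (words_upto (length w) U). intros y [f [Hf1 Hf2]].
  destruct (pick_list le U y) as [z [Hz Hi]].
  { intros a Ha. destruct (In_nth_error _ _ Ha) as [i Hn].
    assert (Hil : i < length y) by (apply nth_error_Some; congruence).
    destruct (Hf2 i Hil) as [x [b [H1 [H2 H3]]]]. rewrite Hn in H1; inversion H1; subst.
    eapply HU; eauto. eapply nth_error_In; eauto. }
  exists z. split.
  - apply words_upto_in; auto. rewrite <- (Forall2_len _ _ _ Hz).
    apply (inj_bound _ _ f); auto.
    intros i Hi'. apply (rel_at_len _ _ _ _ _ (Hf2 i Hi')).
  - split; [apply F2_mset, F2_weak; auto|apply F2_mset, F2_weak, F2_sym; auto].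
Qed.

Fixpoint subseqs {T} (U : list T) : list (list T) :=
  match U with
  | [] => [[]]
  | a :: U => map (cons a) (subseqs U) ++ subseqs U
  end.

Lemma subseqs_filter {T} (U : list T) (P : T -> Prop) :
  exists z, In z (subseqs U) /\ forall d, In d z <-> In d U /\ P d.
Proof.
  induction U as [|a U IH].
  - exists []. simpl. split; auto. intros d; split; [intros []|intros [[] _]].
  - destruct IH as [z [Hz Hd]]. destruct (classic (P a)) as [Pa|nPa].
    + exists (a :: z). split. { simpl. apply in_or_app; left; apply in_map; auto. }
      intros d. simpl. rewrite Hd. split.
      * intros [<-|[H1 H2]]; auto.
      * intros [[<-|H1] H2]; auto.
    + exists z. split. { simpl. apply in_or_app; right; auto. }
      intros d. simpl. rewrite Hd. split.
      * intros [H1 H2]; auto.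
      * intros [[<-|H1] H2]; [contradiction|auto].
Qed.

Lemma hoare_FD {T} (le : T -> T -> Prop) : IsFD le -> IsFD (hoare_le le).
Proof.
  intros Hfd w. destruct (cover_list le Hfd w) as [U HU].
  exists (subseqs U). intros y Hy.
  destruct (subseqs_filter U (fun d => exists a, In a y /\ eqv le a d)) as [z [Hz Hd]].
  exists z. split; auto. split.
  - intros a Ha. destruct (Hy a Ha) as [b [Hb Hab]].
    destruct (HU a b Hb Hab) as [d [HdU E]]. exists d. split; [apply Hd; eauto|apply E].
  - intros d Hdz. apply Hd in Hdz as [_ [a [Ha E]]]. exists a. split; auto. apply E.
Qed.

Lemma word_single {T} (le : T -> T -> Prop) x y : word_le le [x] [y] <-> le x y.
Proof.
  split.
  - intros [f [_ H]]. destruct (H 0 ltac:(simpl; lia)) as [a [b [H1 [H2 H3]]]].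
    simpl in H1. inversion H1; subst.
    destruct (f 0) as [|k]; simpl in H2; [inversion H2; subst; auto|destruct k; discriminate].
  - intros H. apply F2_word. constructor; auto.
Qed.

Lemma mset_single {T} (le : T -> T -> Prop) x y : mset_le le [x] [y] <-> le x y.
Proof.
  split.
  - intros [f [_ H]]. destruct (H 0 ltac:(simpl; lia)) as [a [b [H1 [H2 H3]]]].
    simpl in H1. inversion H1; subst.
    destruct (f 0) as [|k]; simpl in H2; [inversion H2; subst; auto|destruct k; discriminate].
  - intros H. apply F2_mset. constructor; auto.
Qed.

Lemma hoare_single {T} (le : T -> T -> Prop) x y : hoare_le le [x] [y] <-> le x y.
Proof.
  split.
  - intros H. destruct (H x (or_introl eq_refl)) as [b [[<-|[]] Hb]]; auto.
  - intros H a [<-|[]]. exists y. simpl; auto.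
Qed.

Record Good {T} (le : T -> T -> Prop) : Prop := {
  g_refl : IsRefl le; g_trans : IsTrans le; g_fd : IsFD le; g_chain : IsChain le }.

Lemma good_all (e : ewqo) : Good (ele e).
Proof.
  induction e as [|a IHa b IHb|a IHa b IHb|a IHa|a IHa|a IHa]; simpl;
    try (destruct IHa as [Ra Ta Fa Ca]); try (destruct IHb as [Rb Tb Fb Cb]).
  - constructor.
    + intros x; simpl; lia.
    + intros x y z; simpl; lia.
    + intros x. exists (seq 0 (S x)). intros y Hy. exists y. split.
      * apply in_seq. simpl in *; lia.
      * split; simpl; lia.
    + exists (fun i => i). intros i. split; simpl; lia.
  - constructor.
    + intros [x|x]; simpl; auto.
    + intros [x|x] [y|y] [z|z]; simpl; try tauto; eauto.
    + intros [x|x].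
      * destruct (Fa x) as [D HD]. exists (map inl D). intros [y|y] Hy; [|destruct Hy].
        destruct (HD y Hy) as [d [Hd E]]. exists (inl d). split; [apply in_map; auto|exact E].
      * destruct (Fb x) as [D HD]. exists (map inr D). intros [y|y] Hy; [destruct Hy|].
        destruct (HD y Hy) as [d [Hd E]]. exists (inr d). split; [apply in_map; auto|exact E].
    + destruct Ca as [g Hg]. exists (fun i => inl (g i)). intros i. apply Hg.
  - constructor.
    + intros [x y]; split; simpl; auto.
    + intros [x1 x2] [y1 y2] [z1 z2] [H1 H2] [H3 H4]; split; simpl in *; eauto.
    + intros [x1 x2]. destruct (Fa x1) as [D1 H1]. destruct (Fb x2) as [D2 H2].
      exists (list_prod D1 D2). intros [y1 y2] [Hy1 Hy2]. simpl in *.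
      destruct (H1 y1 Hy1) as [d1 [Hd1 [E1 E1']]]. destruct (H2 y2 Hy2) as [d2 [Hd2 [E2 E2']]].
      exists (d1, d2). split; [apply in_prod; auto|split; split; simpl; auto].
    + destruct Ca as [g Hg]. destruct Cb as [h _].
      exists (fun i => (g i, h 0)). intros i. destruct (Hg i) as [H1 H2].
      split; [split; simpl; auto|intros [H3 _]; simpl in *; auto].
  - constructor.
    + intros x. apply F2_word, F2_refl; auto.
    + apply word_trans; auto.
    + apply word_FD; auto.
    + destruct Ca as [g Hg]. exists (fun i => [g i]). intros i.
      destruct (Hg i). split; rewrite word_single; auto.
  - constructor.
    + intros x. apply F2_mset, F2_refl; auto.
    + apply mset_trans; auto.
    + apply mset_FD; auto.
    + destruct Ca as [g Hg]. exists (fun i => [g i]). intros i.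
      destruct (Hg i). split; rewrite mset_single; auto.
  - constructor.
    + intros x c Hc. eauto.
    + apply hoare_trans; auto.
    + apply hoare_FD; auto.
    + destruct Ca as [g Hg]. exists (fun i => [g i]). intros i.
      destruct (Hg i). split; rewrite hoare_single; auto.
Qed.

Lemma sdecr_snoc {T} (le : T -> T -> Prop) l x y :
  sdecr le (l ++ [x]) -> qlt le y x -> sdecr le ((l ++ [x]) ++ [y]).
Proof.
  induction l as [|a l IH]; intros H Hq.
  - simpl. auto.
  - simpl in *. destruct l as [|b l]; simpl in *.
    + destruct H; auto.
    + destruct H as [H1 H2]. split; auto. apply IH in H2; auto.
Qed.

Lemma chain_not_rank {T} (le : T -> T -> Prop) (g : nat -> T)
  (Hg : forall i, qlt le (g i) (g (S i))) :
  forall m s j, sdecr le (s ++ [g (S m + j)]) -> ~ rank_le le m (s ++ [g (S m + j)]).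
Proof.
  induction m as [|m IH]; intros s j Hs Hr.
  - simpl in Hr. apply (Hr ((s ++ [g (S j)]) ++ [g j])).
    exists (g j). split; auto. apply sdecr_snoc; auto.
  - simpl in Hr.
    assert (Hc : child le (s ++ [g (S (S m) + j)]) ((s ++ [g (S (S m) + j)]) ++ [g (S m + j)])).
    { exists (g (S m + j)). split; auto. apply sdecr_snoc; auto. }
    apply Hr in Hc. eapply IH; [|exact Hc]. apply sdecr_snoc; auto.
Qed.

Lemma rank_from_bound {T} (le : T -> T -> Prop) :
  forall n s, (forall u, sdecr le (s ++ u) -> length u <= n) -> rank_le le n s.
Proof.
  induction n as [|n IH]; intros s H.
  - intros t [x [-> Ht]]. specialize (H [x] Ht). simpl in H; lia.
  - intros t [x [-> Ht]]. apply IH. intros u Hu.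
    rewrite <- app_assoc in Hu. specialize (H _ Hu). simpl in H. lia.
Qed.

Lemma qlt_trans {T} (le : T -> T -> Prop) : IsTrans le ->
  forall x y z, qlt le x y -> qlt le y z -> qlt le x z.
Proof.
  intros Ht x y z [H1 H2] [H3 H4]. split; eauto.
Qed.

Lemma sdecr_pairs {T} (le : T -> T -> Prop) : IsTrans le ->
  forall l x, sdecr le (x :: l) ->
  Forall (fun b => qlt le b x) l /\ ForallOrdPairs (fun a b => qlt le b a) (x :: l).
Proof.
  intros Ht. induction l as [|y l IH]; intros x H.
  - split; [constructor|]. constructor; constructor.
  - simpl in H. destruct H as [Hq Hs]. destruct (IH y Hs) as [HF HP].
    assert (HF' : Forall (fun b => qlt le b x) (y :: l)).
    { constructor; auto. eapply Forall_impl; [|exact HF]. intros b Hb.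
      exact (qlt_trans le Ht b y x Hb Hq). }
    split; auto. constructor; auto.
Qed.

Lemma pigeon {T} (le : T -> T -> Prop) : IsTrans le ->
  forall l (D : list T), (forall y, In y l -> exists d, In d D /\ eqv le y d) ->
  ForallOrdPairs (fun a b => qlt le b a) l -> length l <= length D.
Proof.
  intros Ht. induction l as [|a l IH]; intros D HD HP; simpl; [lia|].
  inversion HP as [|a' l' HF HP']; subst.
  destruct (HD a (or_introl eq_refl)) as [d [Hd [E1 E2]]].
  destruct (in_split _ _ Hd) as [D1 [D2 ->]].
  assert (length l <= length (D1 ++ D2)).
  { apply IH; auto. intros y Hy. destruct (HD y (or_intror Hy)) as [d' [Hd' [E3 E4]]].
    exists d'. split; [|split; auto].
    apply in_app_or in Hd'. apply in_or_app. destruct Hd' as [H|[<-|H]]; auto.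
    exfalso. rewrite Forall_forall in HF. destruct (HF y Hy) as [_ Hn]. apply Hn. eauto. }
  rewrite !length_app in *. simpl. lia.
Qed.

Theorem mainTheorem20 (e : ewqo) : height_is_omega (ele e).
Proof.
  destruct (good_all e) as [R Tr F C]. split.
  - intros t [x [-> _]]. simpl. destruct (F x) as [D HD].
    exists (length D). apply rank_from_bound. intros u Hu.
    destruct (sdecr_pairs _ Tr u x Hu) as [HF HP].
    enough (length (x :: u) <= length D) by (simpl in *; lia).
    apply (pigeon _ Tr); auto.
    intros y [<-|Hy]; apply HD; auto.
    rewrite Forall_forall in HF. apply HF; auto.
  - intros n. destruct C as [g Hg]. exists [g (S n + 0)]. split.
    + exists (g (S n + 0)). split; simpl; auto.
    + apply (chain_not_rank _ g Hg n [] 0). simpl; auto.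
Qed.
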